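(* Let $n\geq 1$ be an integer and let $a,b,x\in\mathbb{C}$. Then $$\sum_{k=0}^{n-1}\frac{1}{n}\binom{n}{k}\binom{n}{k+1}x^{2k}b^{n-1-k}=\sum_{k=0}^{n-1}\binom{n-1}{k}M_k^{(a,b)}x^k(x^2-ax+b)^{n-1-k},$$ where $M_k^{(a,b)}$ denotes the $(a,b)$-Motzkin number defined in the context.
   Context: Let $C_k=\frac{1}{k+1}\binom{2k}{k}$ be the Catalan numbers. For an integer $m\geq 0$ and $a,b\in\mathbb{C}$, the $(a,b)$-Motzkin number is $$M_m^{(a,b)}=\sum_{k=0}^{\lfloor m/2\rfloor}\binom{m}{2k}C_k a^{m-2k}b^k .$$ (Equivalently, it is the total weight of Motzkin paths from $(0,0)$ to $(m,m)$ with steps $(0,2),(2,0),(1,1)$ never going below $y=x$, where each $(1,1)$ step has weight $a$, each $(2,0)$ step has weight $b$, and a path's weight is the product of its step weights.) In particular $M_0^{(a,b)}=1$. *)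

(* Defs.v *)
From mathcomp Require Import all_boot all_order all_algebra.
Set Implicit Arguments. Unset Strict Implicit. Unset Printing Implicit Defensive.
Import Order.TTheory GRing.Theory Num.Theory.
Local Open Scope ring_scope.

Definition catalan (k : nat) : nat := 'C(k.*2, k) %/ k.+1.

Definition motzkin {R : comRingType} (a b : R) (m : nat) : R :=
  \sum_(0 <= k < m./2.+1) ('C(m, k.*2) * catalan k)%:R * a ^+ (m - k.*2) * b ^+ k.

(* Main.v *)
Require Import Defs.
From mathcomp Require Import all_boot all_order all_algebra.
From mathcomp Require Import ring zify.
Import Order.TTheory GRing.Theory Num.Theory.

Lemma L1 m k j : j <= k -> k <= m -> 'C(m,k)*'C(k,j) = 'C(m,j)*'C(m-j,k-j).
Proof.
move=> hjk hkm.
apply/eqP; rewrite -(eqn_pmul2r (_ : 0 < j`! * (k-j)`! * (m-k)`!)); last by rewrite !muln_gt0 !fact_gt0.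
apply/eqP.
have e1 := bin_fact hkm; have e2 := bin_fact hjk.
have hjm : j <= m by lia.
have e3 := bin_fact hjm.
have hkj : k - j <= m - j by lia.
have e4 := bin_fact hkj.
rewrite (_ : m-j-(k-j) = m-k) in e4; last by lia.
transitivity ('C(m, k) * ('C(k, j) * (j`! * (k - j)`!)) * (m-k)`!); first by ring.
rewrite e2 -mulnA e1.
transitivity ('C(m, j) * j`! * ('C(m - j, k - j) * ((k - j)`! * (m - k)`!))); last by ring.
by rewrite e4 -mulnA e3.
Qed.

Lemma catalanE j : catalan j * j.+1 = 'C(j.*2, j).
Proof.
have h := mul_bin_left (j.*2) j.
rewrite (_ : j.*2 - j = j) in h; last by lia.
rewrite /catalan.
have -> : 'C(j.*2,j) = ('C(j.*2,j) - 'C(j.*2,j.+1)) * j.+1 by nia.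
by rewrite mulnK.
Qed.

Lemma L2 m k j : j <= k -> k <= m ->
  'C(m,k)*'C(k,j)*'C(m-k,j) = j.+1 * ('C(m,j.*2)*catalan j) * 'C(m-j.*2,k-j).
Proof.
move=> hjk hkm.
case: (leqP (k+j) m) => hkjm; last first.
  rewrite (bin_small (n:=m-k)); last by lia.
  case: (leqP (j.*2) m) => h2.
    rewrite (bin_small (n:=m-j.*2)); last by lia.
    by rewrite !muln0 /=.
  by rewrite muln0 (bin_small h2) mul0n muln0 mul0n.
rewrite L1 //.
have hk : k <= m - j by lia.
have h1 := L1 (m-j) k (k-j) (leq_subr _ _) hk.
have h2 := L1 (m-j) k j hjk hk.
rewrite bin_sub // in h1.
rewrite (_ : m-j-(k-j) = m-k) in h1; last by lia.
rewrite (_ : k-(k-j) = j) in h1; last by lia.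
rewrite (_ : m-j-j = m-j.*2) in h2; last by lia.
have h4 := L1 m (j.*2) j (_ : j <= j.*2) (_ : j.*2 <= m).
rewrite (_ : j.*2 - j = j) in h4; last by lia.
rewrite -catalanE in h4.
rewrite -mulnA -h1 h2 mulnA -h4; [|lia|lia].
rewrite (mulnC (catalan j)) !mulnA (mulnC _ j.+1); done.
Qed.

Lemma sum_trunc (R : nmodType) a N (F : nat -> R) : (a <= N)%N ->
  (forall j, (a <= j)%N -> F j = 0%R) -> (\sum_(0 <= j < N) F j = \sum_(0 <= j < a) F j)%R.
Proof.
move=> h hF; rewrite (big_cat_nat (leq0n a) h) /=.
rewrite [X in (_ + X)%R]big1_seq ?GRing.addr0 // => j /andP[_].
by rewrite mem_index_iota => /andP[hj _]; exact: hF.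
Qed.

Lemma sum_truncn a N (F : nat -> nat) : (a <= N)%N ->
  (forall j, (a <= j)%N -> F j = 0) -> \sum_(0 <= j < N) F j = \sum_(0 <= j < a) F j.
Proof.
move=> h hF; rewrite (big_cat_nat (leq0n a) h) /=.
rewrite [X in (_ + X)]big1_seq ?addn0 // => j /andP[_].
by rewrite mem_index_iota => /andP[hj _]; exact: hF.
Qed.

Lemma V1 k L N : k < N ->
  \sum_(0 <= j < N) 'C(k,j) * 'C(L,j.+1) = 'C(L+k, k.+1).
Proof.
move=> hkN.
rewrite -binomial.Vandermonde big_ord_recl /= subn0 (bin_small (ltnSn k)) muln0 add0n.
rewrite (@sum_truncn k.+1) // => [|j hj]; last by rewrite bin_small ?mul0n.
rewrite big_mkord; apply: eq_bigr => i _ /=.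
rewrite mulnC subSS bin_sub //; exact: (ltn_ord i).
Qed.

Local Open Scope ring_scope.

Definition T {C : numClosedFieldType} (b x : C) m j : C :=
  ('C(m, j.*2) * catalan j)%:R * (b * x ^+ 2) ^+ j * (x ^+ 2 + b) ^+ (m - j.*2).

Lemma stepR (C : numClosedFieldType) (a b x : C) m :
  \sum_(0 <= k < m.+1) 'C(m, k)%:R * motzkin a b k * x ^+ k * (x ^+ 2 - a * x + b) ^+ (m - k)
  = \sum_(0 <= j < m.+1) T b x m j.
Proof.
set y := x ^+ 2 - a * x + b.
transitivity (\sum_(0<=k<m.+1) \sum_(0<=j<m.+1) 'C(m,k)%:R * (('C(k, j.*2) * catalan j)%:R * a ^+ (k - j.*2) * b ^+ j) * x^+k * y^+(m-k)).
  apply: eq_big_nat => k /andP[_ hk].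
  rewrite /motzkin (@sum_trunc _ k./2.+1 m.+1); last 2 first.
  - rewrite ltnS leq_half_double; lia.
  - move=> j hj; rewrite (bin_small (n:=k) (m:=j.*2)) ?mul0n ?mulr0n ?mul0r ?mulr0 ?mul0r //; first by rewrite -ltn_half_double.
    
  by rewrite big_distrr big_distrl big_distrl.
rewrite exchange_big_nat /=.
apply: eq_big_nat => j /andP[_ hj].
rewrite /T; case: (leqP (j.*2) m) => h2; last first.
  rewrite bin_small // mul0n mulr0n !mul0r.
  rewrite big1_seq // => k /andP[_]; rewrite mem_index_iota => /andP[_ hk].
  rewrite (bin_small (n:=k) (m:=j.*2)) ?mul0n ?mulr0n ?mul0r ?mulr0 ?mul0r //; lia.
rewrite (big_cat_nat (leq0n (j.*2)) (_ : (j.*2 <= m.+1)%N)); last by lia.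
rewrite /= big1_seq ?add0r; last first.
  move=> k /andP[_]; rewrite mem_index_iota => /andP[_ hk].
  by rewrite (bin_small (n:=k) (m:=j.*2)) ?mul0n ?mulr0n ?mul0r ?mulr0 ?mul0r.
rewrite -{1}(add0n (j.*2)) big_addn.
rewrite (_ : x^+2 + b = y + a * x); last by rewrite /y; ring.
rewrite exprDn (_ : (m.+1 - j.*2 = (m - j.*2).+1)%N); last by lia.
rewrite big_mkord big_distrr /=.
apply: eq_bigr => [[i hi]] _ /=.
have e := L1 m (i + j.*2) (j.*2) (leq_addl _ _) (_ : (i + j.*2 <= m)%N).
rewrite addnK in e.
rewrite addnK (_ : (m - (i + j.*2) = m - j.*2 - i)%N); last by lia.
transitivity (('C(m, i + j.*2) * ('C(i + j.*2, j.*2) * catalan j))%:R * a^+i * b^+j * x^+(i+j.*2) * y^+(m-j.*2-i)).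
  by rewrite natrM; ring.
rewrite mulnA e; last by lia.
rewrite -[X in _ = _ * X]mulr_natr !natrM exprD exprMn -exprM mul2n exprMn.
move: (x ^+ i) (x ^+ j.*2) (y ^+ (m - j.*2 - i)) (a ^+ i) (b ^+ j) => X1 X2 Y A B; ring.
Qed.

Lemma stepL_coef (C : numClosedFieldType) m k : (k < m.+1)%N ->
  (m.+1%:R)^-1 * ('C(m.+1,k)*'C(m.+1,k.+1))%:R
  = \sum_(0<=j<m.+1) ('C(m,k)*'C(k,j)*'C(m-k,j))%:R / (j.+1)%:R :> C.
Proof.
move=> hk.
have nz1 : (m.+1 - k)%:R != 0 :> C by rewrite pnatr_eq0; lia.
transitivity (\sum_(0<=j<m.+1) ('C(m,k) * ('C(k,j) * 'C(m.+1-k, j.+1)))%:R / (m.+1-k)%:R : C); last first.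
  apply: eq_big_nat => j _; apply/eqP; rewrite eqr_div ?pnatr_eq0 //; last by lia.
  rewrite -!natrM eqr_nat; apply/eqP.
  have md := mul_bin_diag (m.+1-k) j.
  rewrite (_ : ((m.+1-k).-1 = m-k)%N) in md; last by lia.
  rewrite -[RHS]mulnA [(_ * (m.+1-k))%N]mulnC md.
  move: ('C(m, k)) ('C(k, j)) ('C(m.+1 - k, j.+1)) => u v w; ring.
rewrite -big_distrl /= -natr_sum -big_distrr /= (V1 _ _ _ hk) subnK; last by lia.
have e := mul_bin_down m.+1 k.
have e' : ('C(m.+1,k)%:R : C) = m.+1%:R * 'C(m,k)%:R / (m.+1-k)%:R.
  rewrite -natrM e natrM; field; exact: nz1.
rewrite !natrM e'; field.
rewrite nz1 /= (_ : 1 + m%:R = m.+1%:R :> C); first by rewrite pnatr_eq0.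
by rewrite -add1n natrD.
Qed.

Lemma stepL (C : numClosedFieldType) (b x : C) m :
  \sum_(0 <= k < m.+1) (m.+1%:R)^-1 * ('C(m.+1, k) * 'C(m.+1, k.+1))%:R * x ^+ (k.*2) * b ^+ (m - k)
  = \sum_(0 <= j < m.+1) T b x m j.
Proof.
transitivity (\sum_(0<=k<m.+1) \sum_(0<=j<m.+1) ('C(m,k)*'C(k,j)*'C(m-k,j))%:R / (j.+1)%:R * x^+(k.*2) * b^+(m-k) : C).
  apply: eq_big_nat => k /andP[_ hk]; rewrite stepL_coef // !big_distrl //.
rewrite exchange_big_nat /=; apply: eq_big_nat => j /andP[_ hj].
rewrite (big_cat_nat (leq0n j) (ltnW hj)) /= big1_seq ?add0r; last first.
  move=> k /andP[_]; rewrite mem_index_iota => /andP[_ hk].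
  by rewrite (bin_small (n:=k) (m:=j)) // muln0 mul0n mulr0n !mul0r.
rewrite -{1}(add0n j) big_addn.
transitivity (\sum_(0<=i<m.+1-j) ('C(m,j.*2)*catalan j)%:R * 'C(m-j.*2,i)%:R * x^+((i+j).*2) * b^+(m-(i+j)) : C).
  apply: eq_big_nat => i /andP[_ hi].
  rewrite L2; [|lia|lia].
  rewrite addnK !natrM; field.
  by rewrite (_ : 1 + j%:R = j.+1%:R :> C) ?pnatr_eq0 // -add1n natrD.
rewrite /T; case: (leqP (j.*2) m) => h2; last first.
  rewrite bin_small // mul0n mulr0n !mul0r.
  by rewrite big1_seq // => k _; rewrite !mul0r.
rewrite (@sum_trunc _ (m-j.*2).+1 (m.+1-j)); last 2 first.
- lia.
- by move=> i hi; rewrite (bin_small (n:=m - j.*2) (m:=i)) // mulr0 !mul0r.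
rewrite addrC exprDn big_mkord big_distrr /=.
apply: eq_bigr => [[i hi]] _ /=.
rewrite (_ : (m - (i + j) = j + (m - j.*2 - i))%N); last by lia.
rewrite -[X in _ = _ * X]mulr_natr.
have ex : x ^+ ((i+j).*2) = (x^+2)^+i * (x^+2)^+j.
  by rewrite -!exprM -exprD doubleD -!mul2n.
rewrite ex exprD (exprMn j b).
move: ((x^+2)^+i) ((x^+2)^+j) (b^+j) (b^+(m - j.*2 - i)) => X1 X2 B Y; ring.
Qed.

Theorem theorem1p1 (C : numClosedFieldType) (n : nat) (a b x : C) :
  (1 <= n)%N ->
  \sum_(0 <= k < n) (n%:R)^-1 * ('C(n, k) * 'C(n, k.+1))%:R * x ^+ (k.*2) * b ^+ (n.-1 - k)
  = \sum_(0 <= k < n) 'C(n.-1, k)%:R * motzkin a b k * x ^+ k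
      * (x ^+ 2 - a * x + b) ^+ (n.-1 - k).
Proof.
case: n => [//|m] _.
change (m.+1.-1) with m.
by rewrite stepL stepR.
Qed.
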